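(* For each approval election $E=(C,V)$, $\mathrm{out\text{-}div}(E)\in[0,1]$.
   Context: An (approval) election is $E=(C,V)$ with $|C|=m$ candidates and a collection of voters $V=(v_1,\dots,v_n)$, each vote a binary vector in $\{0,1\}^m$; $A(v)$ is the set of candidates approved by $v$, and $\mathrm{satr}(E)=\frac{1}{nm}\sum_{v\in V}|A(v)|$. $\mathrm{ham}(u,v)=\sum_j|u[j]-v[j]|$. For collections $U=(u_1,\dots,u_k)$ and $V=(v_1,\dots,v_n)$, $\mathrm{ham}(U,V)=\frac{1}{kn}\min_{\pi}\sum_{i=1}^{kn}\mathrm{ham}(u_i,v_{\pi(i)})$ over bijections $\pi:[kn]\to[kn]$, indices of $U$ taken modulo $k$ and of $V$ modulo $n$. For rational $p\in[0,1]$, $p\text{-}\mathcal{U}_C$ is the collection in which each vote $w\in\{0,1\}^m$ appears a number of times proportional to $p^{r}(1-p)^{m-r}$, $r$ being the number of ones of $w$. With $p=\mathrm{satr}(E)$, Outer Diversity is $\mathrm{out\text{-}div}(E)=1-\frac{1}{2p(1-p)}\mathrm{ham}(V,p\text{-}\mathcal{U}_C)$.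
   Formalization: Outer Diversity divides $\mathrm{ham}(V,p\text{-}\mathcal{U}_C)$ by 2m·p(1−p) in place of $2p(1-p)$, so the Hamming distance to $p\text{-}\mathcal{U}_C$ is normalized per candidate. This corrects a misprint. *)

(* Defs.v *)
From mathcomp Require Import all_boot all_order all_algebra.
From mathcomp Require Import fingroup perm.
Set Implicit Arguments. Unset Strict Implicit. Unset Printing Implicit Defensive.
Import Order.TTheory GRing.Theory Num.Theory.
Local Open Scope ring_scope.

Definition vote (m : nat) := {ffun 'I_m -> bool}.

Definition vote0 (m : nat) : vote m := [ffun=> false].

Definition nappr (m : nat) (v : vote m) : nat := (\sum_(j < m) (v j : nat))%N.

Definition hamv (m : nat) (u v : vote m) : nat := (\sum_(j < m) (u j != v j : nat))%N.

(* An election with candidate set 'I_m and voter collection V (a sequence,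
   repetitions allowed, n = size V).  Total number of approvals: *)
Definition total_appr (m : nat) (V : seq (vote m)) : nat :=
  (\sum_(v <- V) nappr v)%N.

Definition satr (R : realFieldType) (m : nat) (V : seq (vote m)) : R :=
  (total_appr V)%:R / (size V * m)%:R.

(* Cost of a bijection pi : [kn] -> [kn], indices of U mod k, of V mod n. *)
Definition match_cost (m : nat) (U V : seq (vote m))
  (pi : {perm 'I_(size U * size V)}) : nat :=
  (\sum_(i < size U * size V)
     hamv (nth (vote0 m) U (i %% size U)) (nth (vote0 m) V (pi i %% size V)))%N.

Arguments match_cost : clear implicits.
Arguments match_cost {m} U V pi.

Definition ham_coll (R : realFieldType) (m : nat) (U V : seq (vote m)) : R :=
  (\big[minn/match_cost U V 1%g]_(pi : {perm 'I_(size U * size V)})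
      match_cost U V pi)%:R / (size U * size V)%:R.

(* p-U_C for p = a/b (0 <= a <= b): each w in {0,1}^m appears
   a^r (b-a)^(m-r) times, r = number of ones of w; this is proportional to
   p^r (1-p)^(m-r). *)
Definition pU (m a b : nat) : seq (vote m) :=
  flatten [seq nseq (a ^ nappr w * (b - a) ^ (m - nappr w))%N w
          | w <- enum {ffun 'I_m -> bool}].

(* Outer diversity, with p = satr(E) = total_appr V / (n m).
   The Hamming distance is normalized per candidate (division by m). *)
Definition out_div (R : realFieldType) (m : nat) (V : seq (vote m)) : R :=
  let p : R := satr R V in
  1 - (ham_coll R V (pU m (total_appr V) (size V * m)))
        / (2 * m%:R * p * (1 - p)).

(* Main.v *)
Require Import Defs.
From mathcomp Require Import all_boot all_order all_algebra.
From mathcomp Require Import fingroup perm.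
From mathcomp Require Import ring.
Set Implicit Arguments. Unset Strict Implicit. Unset Printing Implicit Defensive.
Import Order.TTheory GRing.Theory Num.Theory.

Lemma sum_mod k n (g : nat -> nat) :
  (\sum_(0 <= i < k * n) g (i %% k) = n * \sum_(0 <= a < k) g a)%N.
Proof.
elim: n => [|n IH]; first by rewrite muln0 big_geq.
rewrite mulnSr (big_cat_nat (leq0n (k * n)) (leq_addr k (k * n))) /= IH.
rewrite -{1}(add0n (k * n)) big_addn. rewrite [(k*n+k)%N]addnC addnK mulSn addnC; congr (_ + _)%N.
apply: eq_big_nat => i /andP [_ hi].
by rewrite [(k*n)%N]mulnC addnC modnMDl modn_small.
Qed.

Lemma sum_modo k n (g : nat -> nat) :
  (\sum_(i < k * n) g (i %% k) = n * \sum_(a < k) g a)%N.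
Proof. by rewrite -(big_mkord xpredT (fun i => g (i %% k))) sum_mod big_mkord. Qed.

Lemma sum_modo2 k n (g : nat -> nat) :
  (\sum_(i < k * n) g (i %% n) = k * \sum_(a < n) g a)%N.
Proof. by rewrite -(big_mkord xpredT (fun i => g (i %% n))) mulnC sum_mod big_mkord. Qed.

Section Shift.
Variables (N : nat) (hN : (0 < N)%N).
Definition shf (s : 'I_N) (i : 'I_N) : 'I_N := Ordinal (ltn_pmod (i + s) hN).
Lemma shf_inj s : injective (shf s).
Proof.
move=> i j /(congr1 val) /= /eqP; rewrite eqn_modDr !modn_small // => /eqP.
exact: val_inj.
Qed.
Definition shp s : {perm 'I_N} := perm (@shf_inj s).
Lemma shpE s i : val (shp s i) = ((i + s) %% N)%N.
Proof. by rewrite permE. Qed.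
End Shift.

Lemma bigmin_le (T : finType) (x0 : nat) (f : T -> nat) (t : T) :
  (\big[minn/x0]_(x : T) f x <= f t)%N.
Proof.
rewrite unlock; have : t \in index_enum T by rewrite mem_index_enum.
elim: (index_enum T) => //= x r IH; rewrite in_cons => /orP [/eqP <-|/IH h].
  exact: geq_minl.
by rewrite geq_min h orbT.
Qed.

Lemma avg_bound m (U W : seq (vote m)) :
  (0 < size U * size W)%N ->
  (\big[minn/match_cost U W 1%g]_(pi : {perm 'I_(size U * size W)}) match_cost U W pi
   <= \sum_(a < size U) \sum_(b < size W) hamv (nth (vote0 m) U a) (nth (vote0 m) W b))%N.
Proof.
move=> hN. match goal with |- is_true (leq ?X _) => set M := X end.
set k := size U; set n := size W.
have H1 : (k * n * M <= \sum_(s < k * n) match_cost U W (shp hN s))%N.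
  have -> : (k * n * M = \sum_(s < k * n) M)%N by rewrite sum_nat_const card_ord.
  apply: leq_sum => s _.
  exact: bigmin_le.
have H2 : (\sum_(s < k * n) match_cost U W (shp hN s)
    = k * n * \sum_(a < k) \sum_(b < n) hamv (nth (vote0 m) U a) (nth (vote0 m) W b))%N.
  rewrite /match_cost -/k -/n exchange_big /=.
  transitivity (\sum_(i < k * n) \sum_(t < k * n)
     hamv (nth (vote0 m) U (i %% k)) (nth (vote0 m) W (t %% n)))%N.
    apply: eq_bigr => i _.
    rewrite [RHS](reindex_inj (@perm_inj _ (shp hN i))) /=.
    apply: eq_bigr => s _.
    suff -> : val (shp hN s i) = val (shp hN i s) by [].
    by rewrite !shpE addnC.
  transitivity (\sum_(i < k * n) (k * \sum_(b < n)
     hamv (nth (vote0 m) U (i %% k)) (nth (vote0 m) W b)))%N.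
    apply: eq_bigr => i _.
    exact: (sum_modo2 k n (fun b => hamv (nth (vote0 m) U (i %% k)) (nth (vote0 m) W b))).
  rewrite (sum_modo k n (fun a => k * \sum_(b < n) hamv (nth (vote0 m) U a) (nth (vote0 m) W b)))%N.
  by rewrite -big_distrr /= mulnA [(n * k)%N]mulnC.
rewrite H2 in H1.
by rewrite leq_pmul2l in H1.
Qed.

Definition wt m a b (w : vote m) := (a ^ nappr w * (b - a) ^ (m - nappr w))%N.

Lemma pU_sum m a b (F : vote m -> nat) :
  (\sum_(w <- pU m a b) F w = \sum_(w : vote m) wt a b w * F w)%N.
Proof.
rewrite /pU big_flatten /= big_map big_enum /=.
apply: eq_bigr => w _; rewrite big_nseq /wt.
by elim: (_ ^ _ * _)%N => //= n ->; rewrite mulSn.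
Qed.

Lemma nappr_card m (w : vote m) : nappr w = #|[pred i | w i]|.
Proof.
rewrite /nappr -sum1_card [RHS]big_mkcond /=.
apply: eq_bigr => i _. rewrite inE. by case: (w i).
Qed.

Lemma prod_const_cond (I : finType) (P : pred I) c :
  (\prod_(i | P i) c = c ^ #|[pred i | P i]|)%N.
Proof. by rewrite -prod_nat_const. Qed.

Lemma wt_prod m a b (w : vote m) :
  wt a b w = (\prod_(i < m) (if w i then a else b - a))%N.
Proof.
rewrite (bigID (fun i => w i)) /=.
rewrite (eq_bigr (fun _ => a)); last by move=> i ->.
rewrite [X in (_ * X)%N](eq_bigr (fun _ => b - a)); last by move=> i /negbTE ->.
rewrite !prod_const_cond /wt nappr_card; congr (_ * _ ^ _)%N.
have h := cardC [pred i | w i]; have e := card_ord m.  rewrite -{1}e -h addKn.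
by apply: eq_card => i.
Qed.

Lemma sum_wt m a b : (a <= b)%N -> (\sum_(w : vote m) wt a b w = b ^ m)%N.
Proof.
move=> hab.
under eq_bigr do rewrite wt_prod.
rewrite -(bigA_distr_bigA (fun (i : 'I_m) (x : bool) => if x then a else b - a)) /=.
under eq_bigr do rewrite big_bool /= subnKC //.
by rewrite prod_nat_const card_ord.
Qed.

Lemma sum_wt_j m a b (j : 'I_m) : (a <= b)%N ->
  (\sum_(w : vote m) wt a b w * w j = a * b ^ m.-1)%N.
Proof.
move=> hab.
pose G (i : 'I_m) (x : bool) := if i == j then (if x then a else 0) else (if x then a else b - a).
transitivity (\sum_(w : vote m) \prod_(i < m) G i (w i))%N.
  apply: eq_bigr => w _; rewrite wt_prod (bigD1 j) //= [RHS](bigD1 j) //= /G eqxx.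
  rewrite [X in (_ * X * _)%N](eq_bigr (fun i => G i (w i))); last first.
    by move=> i /negbTE hi; rewrite /G hi.
  by case: (w j); rewrite ?muln1 ?muln0.
rewrite -(bigA_distr_bigA G) /= (bigD1 j) //= big_bool /G eqxx.
change (ssrnat_addn__canonical__Monoid_ComLaw a 0) with (a + 0)%N; rewrite addn0; congr (_ * _)%N.
rewrite (eq_bigr (fun _ => b)); last first.
  by move=> i /negbTE hi; rewrite big_bool hi /= subnKC.
rewrite prod_const_cond (_ : #|[pred i | i != j]| = #|predC1 j|); last by apply: eq_card => i.
by rewrite cardC1 card_ord.
Qed.

Lemma ham_pt m (v w : vote m) :
  (hamv v w + 2 * (\sum_(j < m) v j * w j) = nappr v + nappr w)%N.
Proof.
rewrite /hamv /nappr big_distrr -!big_split /=; apply: eq_bigr => j _.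
by case: (v j); case: (w j).
Qed.

Lemma sum_const_seq (T : Type) (s : seq T) c :
  (\sum_(x <- s) c = size s * c)%N.
Proof. by elim: s => [|x s IH]; rewrite ?big_nil ?big_cons ?IH ?mulSn. Qed.

Lemma S_ident m (V P : seq (vote m)) d :
  (forall j : 'I_m, \sum_(w <- P) (w j : nat) = d)%N ->
  (\sum_(v <- V) \sum_(w <- P) hamv v w + 2 * (total_appr V * d)
    = size P * total_appr V + size V * (m * d))%N.
Proof.
move=> hd.
have E1 : (\sum_(v <- V) \sum_(w <- P) (2 * \sum_(j < m) v j * w j)
            = 2 * (total_appr V * d))%N.
  transitivity (\sum_(v <- V) 2 * (nappr v * d))%N.
    apply: eq_bigr => v _; rewrite -big_distrr /= exchange_big /=.
    congr (2 * _)%N; rewrite /nappr big_distrl /=; apply: eq_bigr => j _.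
    by rewrite -big_distrr /= hd.
  by rewrite -big_distrr /= /total_appr -big_distrl.
rewrite -E1 -big_split /=.
under eq_bigr do rewrite -big_split /=.
under eq_bigr do under eq_bigr do rewrite ham_pt.
have E2 : (\sum_(w <- P) nappr w = m * d)%N.
  rewrite /nappr exchange_big /=.
  under eq_bigr do rewrite hd.
  by rewrite sum_nat_const card_ord.
under eq_bigr do rewrite big_split /= E2 sum_const_seq.
by rewrite big_split /= sum_const_seq /total_appr big_distrr.
Qed.

Lemma big_nth_ord (T : Type) (x0 : T) (s : seq T) (F : T -> nat) :
  (\sum_(x <- s) F x = \sum_(i < size s) F (nth x0 s i))%N.
Proof. by rewrite (big_nth x0) big_mkord. Qed.

Lemma nappr_le m (v : vote m) : (nappr v <= m)%N.
Proof.
rewrite /nappr -[X in (_ <= X)%N](card_ord m) -sum1_card.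
by apply: leq_sum => j _; case: (v j).
Qed.

Lemma total_le m (V : seq (vote m)) : (total_appr V <= size V * m)%N.
Proof.
rewrite /total_appr -sum_const_seq; elim: V => [|v V IH]; rewrite ?big_nil // !big_cons.
by apply: leq_add => //; apply: nappr_le.
Qed.

Definition hmin m (U W : seq (vote m)) : nat :=
  (\big[minn/match_cost U W 1%g]_(pi : {perm 'I_(size U * size W)}) match_cost U W pi)%N.

Local Open Scope ring_scope.

Theorem proposition7 (R : realFieldType) (m : nat) (V : seq (vote m)) :
  0 <= out_div R V <= 1.
Proof.
rewrite /out_div /ham_coll /satr -/(hmin V (pU m (total_appr V) (size V * m))).
set k := size V; set A := total_appr V; set B := (k * m)%N.
set P := pU m A B.
set M := hmin V P.
have hAB : (A <= B)%N by exact: total_le.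
have hdiv0 : forall x : R, x / 0 = 0 by move=> x; rewrite invr0 mulr0.
have [hB0|hBpos] := eqVneq B 0%N.
  rewrite hB0 hdiv0 mulr0 mul0r hdiv0 subr0 lexx ler01 //.
have hk : (0 < k)%N by move: hBpos; rewrite /B muln_eq0 negb_or lt0n => /andP [].
have hm : (0 < m)%N by move: hBpos; rewrite /B muln_eq0 negb_or lt0n => /andP [].
have hsz : size P = (B ^ m)%N.
  by rewrite -[size P]muln1 -sum_const_seq pU_sum -(sum_wt m hAB); apply: eq_bigr => w _; rewrite muln1.
have hcol : forall j : 'I_m, (\sum_(w <- P) (w j : nat) = A * B ^ m.-1)%N.
  by move=> j; rewrite pU_sum sum_wt_j.
have hS := S_ident V hcol.
set S := (\sum_(v <- V) \sum_(w <- P) hamv v w)%N in hS.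
have hN : (0 < k * size P)%N by rewrite hsz muln_gt0 hk expn_gt0 lt0n hBpos.
have hMS : (M <= S)%N.
  have := avg_bound hN; rewrite -/M -/k => h; apply: (leq_trans h).
  rewrite /S (big_nth_ord (vote0 m)); apply: leq_sum => a _.
  by rewrite (big_nth_ord (vote0 m)).
set p : R := A%:R / (k * m)%:R.
set D : R := 2 * m%:R * p * (1 - p).
have hBR : (0 : R) < B%:R by rewrite ltr0n lt0n.
have hp0 : 0 <= p by rewrite /p divr_ge0.
have hp1 : p <= 1 by rewrite /p ler_pdivrMr // mul1r ler_nat.
have hD : 0 <= D by rewrite /D !mulr_ge0 ?subr_ge0 ?ler0n ?invr_ge0 ?ler0n.
have hc0 : (0 : R) <= M%:R / (k * size P)%:R by rewrite divr_ge0.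
apply/andP; split; last by rewrite gerBl divr_ge0.
rewrite subr_ge0.
have [->|hD0] := eqVneq D 0; first by rewrite hdiv0.
have hDp : 0 < D by rewrite lt_def hD0 hD.
rewrite ler_pdivrMr // mul1r.
have hNR : (0 : R) < (k * size P)%:R by rewrite ltr0n.
rewrite ler_pdivrMr //.
apply: (le_trans (y := S%:R)); first by rewrite ler_nat.
rewrite le_eqVlt; apply/orP; left; apply/eqP.
have eB : (B ^ m = B * B ^ m.-1)%N by rewrite -expnS prednK.
rewrite hsz eB in hS *.
have := congr1 (fun n => n%:R : R) hS; rewrite /= !natrD !natrM !natrX => h.
rewrite -/A -/k in h.
rewrite (canRL (addrK _) h) /D /p /B !natrM.
have hk0 : (k%:R : R) != 0 by rewrite pnatr_eq0 -lt0n.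
have hm0 : (m%:R : R) != 0 by rewrite pnatr_eq0 -lt0n.
rewrite /k /A; field.
by rewrite hk0 hm0.
Qed.
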